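(* Fix $k\in\mathbb{N}$ and a cycle structure $x$ of some element of $S_\infty$. Then there exists $b_x\in\mathbb{N}$ such that for every finite group $G$ of cyclicity level $k$ and every injective homomorphism $\phi:G\hookrightarrow S_\infty$, the subgroup $\phi(G)$ contains at most $b_x$ elements with cycle structure $x$.
   Context: $S_\infty$ is the group of permutations of $\mathbb{N}$ fixing all but finitely many elements. The cycle structure of $\sigma\in S_\infty$ is the non-increasing sequence of lengths of its disjoint cycles. The cyclicity level of a finite solvable group $G$ is the minimal $k$ such that there is a chain $1=H_0\lhd H_1\lhd\cdots\lhd H_k=G$ with each $H_i$ normal in $H_{i+1}$ and $H_{i+1}/H_i$ cyclic. *)

(* Defs.v *)
From mathcomp Require Import all_boot all_order all_fingroup all_solvable.
Set Implicit Arguments. Unset Strict Implicit. Unset Printing Implicit Defensive.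
Local Open Scope group_scope.

(* Fixed points are
   not recorded, matching the S_infinity convention (an element of S_inf has
   infinitely many fixed points and finitely many nontrivial cycles). *)
Definition cycle_type (T : finType) (s : {perm T}) : seq nat :=
  sort geq [seq #|c| | c : {set T} <- enum (porbits s) & (1 < #|c|)%N].

(* A cyclic series of G of length size s:
   1 = H_0 <| H_1 <| ... <| H_k = G, with s = [:: H_1; ...; H_k],
   each H_i normal in H_{i+1} and H_{i+1}/H_i cyclic. *)
Definition cyclic_series (gT : finGroupType) (G : {group gT})
    (s : seq {group gT}) : bool :=
  path (fun H K : {group gT} => (H <| K) && cyclic (K / H)) 1%G s
  && (last 1%G s == G).

Definition cyclicity_level (gT : finGroupType) (G : {group gT}) (k : nat) : Prop :=
  (exists s, cyclic_series G s /\ size s = k) /\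
  (forall s, cyclic_series G s -> (k <= size s)%N).

(* Main.v *)
Require Import Defs.
From mathcomp Require Import all_boot all_order all_fingroup all_solvable.
Set Implicit Arguments. Unset Strict Implicit.
Local Open Scope group_scope.

Definition moved (T : finType) (s : {perm T}) := [set i | s i != i].

Lemma card_bigcup_le (I T : finType) (P : pred I) (F : I -> {set T}) :
  (#|\bigcup_(i | P i) F i| <= \sum_(i | P i) #|F i|)%N.
Proof.
apply: (big_ind2 (fun (U : {set T}) n => #|U| <= n)%N).
- by rewrite cards0.
- move=> U1 n1 U2 n2 h1 h2; apply: leq_trans (leq_card_setU _ _) _.
  exact: leq_add.
- by [].
Qed.

Lemma moved_cycle_type (T : finType) (s : {perm T}) :
  (#|moved s| <= sumn (cycle_type s))%N.
Proof.
rewrite /cycle_type (perm_sumn (permEl (perm_sort _ _))) sumnE big_map big_filter.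
rewrite big_enum_cond /=.
apply: leq_trans (card_bigcup_le _ (fun c => c)).
apply: subset_leq_card.
apply/subsetP => i; rewrite inE => hi.
apply/bigcupP; exists (porbit s i); last exact: porbit_id.
rewrite imset_f //=.
apply: (@leq_trans #|[set i; s i]|); first by rewrite cards2 eq_sym hi.
apply/subset_leq_card/subsetP => j; rewrite !inE => /orP[]/eqP ->.
  exact: porbit_id.
by rewrite -(expg1 s) mem_porbit.
Qed.

Lemma small_moved_exp (T : finType) (s : {perm T}) m :
  (#|moved s| <= m)%N -> s ^+ m`! = 1.
Proof.
move=> hm; apply/permP => i; rewrite perm1.
have [hi|hi] := eqVneq (s i) i; first exact: permX_fix.
have sub : porbit s i \subset moved s.
  apply/subsetP => j /porbitP[a ->]; rewrite inE.
  apply: contra hi => /eqP h; apply/eqP; apply: (@perm_inj _ (s ^+ a)).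
  by rewrite -permM -expgS expgSr permM h.
have hd : (#|porbit s i| %| m`!)%N.
  by apply: dvdn_fact; rewrite lt0n card_porbit_neq0 (leq_trans (subset_leq_card sub)).
case/dvdnP: hd => q ->; rewrite mulnC expgM; apply: permX_fix.
by rewrite permX iter_porbit.
Qed.

Lemma moved_mul (T : finType) (s t : {perm T}) :
  (#|moved (s^-1 * t)| <= #|moved s| + #|moved t|)%N.
Proof.
apply: leq_trans (leq_card_setU _ _); apply: subset_leq_card.
apply/subsetP => i; rewrite !inE; apply: contraR; rewrite negb_or !negbK.
case/andP => /eqP h1 /eqP h2; rewrite permM -{1}h1 permK h2.
by [].
Qed.

Lemma cyclic_Ldiv (gT : finGroupType) (C : {group gT}) N :
  cyclic C -> (0 < N)%N -> (#|'Ldiv_N(C)| <= N)%N.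
Proof.
move=> cC N0; have gL := group_Ldiv N (cyclic_abelian cC).
have /cyclicP[z defL] : cyclic (Group gL) by apply: cyclicS cC; rewrite subsetIl.
have : z \in 'Ldiv_N(C) by rewrite -[_ \in _]/(z \in Group gL) defL cycle_id.
move=> /LdivP[_ zN].
have -> : #|'Ldiv_N(C)| = #[z] by rewrite /order -defL.
by apply: dvdn_leq N0 _; rewrite order_dvdn zN.
Qed.

Fixpoint F (k m : nat) : nat :=
  match k with 0 => 1 | k'.+1 => m`! * F k' m.*2 end.

Section Count.
Variables (gT : finGroupType) (G : {group gT}) (n : nat).
Variable phi : {morphism G >-> {perm 'I_n}}.
Hypothesis injphi : 'injm phi.

Let sm y := #|moved (phi y)|.

Lemma step (H K : {group gT}) m : H <| K -> cyclic (K / H) -> K \subset G ->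
  (#|[set y in K | sm y <= m]| <= m`! * #|[set y in H | sm y <= m.*2]|)%N.
Proof.
move=> nHK cKH sKG; have sKN := normal_norm nHK.
rewrite -sum1_card (partition_big (coset H) (mem 'Ldiv_(m`!)(K / H))) /=.
  pose B := #|[set y in H | sm y <= m.*2]|.
  have fib : forall c : coset_of H,
      (\sum_(i | (i \in [set y in K | sm y <= m]) && (coset H i == c)) 1 <= B)%N.
    move=> c; rewrite sum1_card.
    case: (pickP [pred i | (i \in [set y in K | sm y <= m]) && (coset H i == c)])
      => [y0 /andP[y0A /eqP y0c] | none]; last by rewrite eq_card0.
    move: y0A; rewrite inE => /andP[y0K y0m].
    have y0G := subsetP sKG y0 y0K; have y0N := subsetP sKN y0 y0K.
    rewrite -(card_imset _ (mulgI y0^-1)); apply: subset_leq_card.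
    apply/subsetP => z /imsetP[y]; rewrite !inE.
    rewrite unfold_in /= inE => /andP[/andP[yK ym] /eqP yc] ->.
    have yG := subsetP sKG y yK; have yN := subsetP sKN y yK.
    apply/andP; split.
      apply: coset_idr; first by rewrite groupM ?groupV.
      rewrite morphM ?groupV // morphV //.
      by rewrite /= y0c yc mulVg.
    rewrite /sm morphM ?groupV // morphV //.
    by apply: leq_trans (moved_mul _ _) _; rewrite -addnn leq_add.
  apply: leq_trans; first by apply: leq_sum => c _; exact: fib.
  rewrite sum_nat_const.
  exact: leq_mul (cyclic_Ldiv cKH (fact_gt0 _)) (leqnn _).
move=> y; rewrite inE => /andP[yK ym].
have yG := subsetP sKG y yK; have yN := subsetP sKN y yK.
apply/LdivP; split; first exact: mem_quotient.
have : phi (y ^+ m`!) == 1 by rewrite morphX // small_moved_exp.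
rewrite morph_injm_eq1 ?groupX // => /eqP e.
by rewrite -morphX // e morph1.
Qed.

Lemma series_bound (sq : seq {group gT}) :
  path (fun H K : {group gT} => (H <| K) && cyclic (K / H)) 1%G sq ->
  last 1%G sq \subset G ->
  forall m, (#|[set y in last 1%G sq | sm y <= m]| <= F (size sq) m)%N.
Proof.
elim/last_ind: sq => [_ _ m | sq K IH].
  apply: leq_trans (_ : #|[1 gT]| <= 1)%N; last by rewrite cards1.
  by apply: subset_leq_card; apply/subsetP => y; rewrite inE => /andP[].
rewrite rcons_path last_rcons size_rcons => /andP[hp /andP[nHK cKH]] sKG m /=.
apply: leq_trans (step m nHK cKH sKG) _; rewrite leq_mul2l; apply/orP; right.
exact: IH hp (subset_trans (normal_sub nHK) sKG) m.*2.
Qed.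

Lemma level_bound k : cyclicity_level G k ->
  forall m, (#|[set y in G | sm y <= m]| <= F k m)%N.
Proof.
case=> [[sq [/andP[hp /eqP hl] <-]] _] m.
by have := series_bound hp; rewrite hl => /(_ (subxx _) m).
Qed.
End Count.

Theorem mainTheorem10 (k : nat) (x : seq nat)
    (hx : exists (n : nat) (s : 'S_n), cycle_type s = x) :
  exists b : nat,
    forall (gT : finGroupType) (G : {group gT}),
      cyclicity_level G k ->
      forall (n : nat) (phi : {morphism G >-> {perm 'I_n}}),
        'injm phi ->
        (#|[set s in phi @* G | cycle_type s == x]| <= b)%N.
Proof.
exists (F k (sumn x)) => gT G lv n phi inj.
have h := level_bound inj lv (sumn x).
apply: leq_trans _ h.
apply: leq_trans _ (leq_imset_card phi _).
apply: subset_leq_card; apply/subsetP => s; rewrite inE => /andP[/morphimP[y yD yG ->] /eqP ct].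
apply/imsetP; exists y => //; rewrite inE yG /=.
by rewrite -ct moved_cycle_type.
Qed.
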